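(* Let $G=(V,E)$ be a simple undirected graph that is not complete. Then (a) $\textnormal{conv}(X(G))\subseteq\mathbb{R}^{E^c}$ is full-dimensional, and (b) for every $f\in E^c$ the inequality $x_f\le 1$ is facet-defining for $\textnormal{conv}(X(G))$.
   Context: $E^c=\binom{V}{2}\setminus E$. For $x\in\{0,1\}^{E^c}$, $E(x)=\{f\in E^c:x_f=1\}$, and $X(G)=\{x\in\{0,1\}^{E^c}:(V,E\cup E(x))\text{ is chordal}\}$, where a graph is chordal if every cycle with at least four vertices has a chord (an edge joining two nonconsecutive vertices of the cycle). *)

(* Defs.v *)
From mathcomp Require Import all_boot all_order all_algebra.
Set Implicit Arguments. Unset Strict Implicit. Unset Printing Implicit Defensive.
Import Order.TTheory GRing.Theory Num.Theory.
Local Open Scope ring_scope.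

(* A simple undirected graph G = (V,E) is given by V : finType and a
   symmetric irreflexive relation e : rel V (u ~ v iff {u,v} \in E). *)

Definition is_nonedge (V : finType) (e : rel V) (s : {set V}) : bool :=
  [exists u, exists v, [&& u != v, s == [set u; v] & ~~ e u v]].

Notation Ec e := {s : {set _} | is_nonedge e s}.

Definition augment (V : finType) (e : rel V) (x : {ffun Ec e -> bool}) : rel V :=
  fun u v => e u v || [exists f : Ec e, (val f == [set u; v]) && x f].

Definition chordal (V : finType) (g : rel V) : Prop :=
  forall (x0 : V) (c : seq V), (4 <= size c)%N -> uniq c -> cycle g c ->
    exists i j : nat, [/\ (i < size c)%N /\ (j < size c)%N, i != j,
      j != (i.+1 %% size c)%N, i != (j.+1 %% size c)%N
      & g (nth x0 c i) (nth x0 c j)].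
(* (x0 is only a default value for nth; all indices used are in range.) *)

Definition XG (V : finType) (e : rel V) (x : {ffun Ec e -> bool}) : Prop :=
  chordal (augment x).

Definition conv01 (R : realFieldType) (I : finType) (S : {ffun I -> bool} -> Prop)
    (y : I -> R) : Prop :=
  exists lam : {ffun I -> bool} -> R,
    [/\ forall x, 0 <= lam x, forall x, lam x != 0 -> S x,
        \sum_(x : {ffun I -> bool}) lam x = 1
      & forall i, y i = \sum_(x : {ffun I -> bool}) lam x * (x i)%:R].

Definition aff_indep (R : realFieldType) (I : finType) (k : nat) (p : 'I_k -> I -> R) : Prop :=
  forall mu : 'I_k -> R, \sum_(j < k) mu j = 0 ->
    (forall i, \sum_(j < k) mu j * p j i = 0) -> forall j, mu j = 0.

(* aff_rank S n : the maximum number of affinely independent points of S is n,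
   i.e. dim(S) = n - 1 (dimension of the affine hull). *)
Definition aff_rank (R : realFieldType) (I : finType) (S : (I -> R) -> Prop) (n : nat) : Prop :=
  (exists p : 'I_n -> I -> R, (forall j, S (p j)) /\ aff_indep p) /\
  (forall (m : nat) (p : 'I_m -> I -> R), (forall j, S (p j)) -> aff_indep p -> (m <= n)%N).

Definition full_dimensional (R : realFieldType) (I : finType) (S : (I -> R) -> Prop) : Prop :=
  aff_rank S #|I|.+1.

Definition facet_defining (R : realFieldType) (I : finType) (P : (I -> R) -> Prop)
    (a : I -> R) (b : R) : Prop :=
  (forall y, P y -> \sum_i a i * y i <= b) /\
  exists n : nat, aff_rank P n.+1 /\
                  aff_rank (fun y => P y /\ \sum_i a i * y i = b) n.

(* Main.v *)
Require Import Defs.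
From mathcomp Require Import all_boot all_order all_algebra.
Import Order.TTheory GRing.Theory Num.Theory.
Local Open Scope ring_scope.

Lemma kernel_nontriv (R : fieldType) (J : finType) m (q : 'I_m -> J -> R) :
  (#|J| < m)%N -> exists mu : 'I_m -> R, (exists j, mu j != 0) /\
     forall i, \sum_(j < m) mu j * q j i = 0.
Proof.
move=> Hm.
pose A : 'M[R]_(m, #|J|) := \matrix_(j, k) q j (enum_val k).
have HK : kermx A != 0.
  rewrite -mxrank_eq0 mxrank_ker.
  have := rank_leq_col A. move=> H. rewrite subn_eq0 -ltnNge.
  exact: leq_ltn_trans H Hm.
have [[r c] /= Hrc|H0] := pickP (fun rc : 'I_m * 'I_m => kermx A rc.1 rc.2 != 0); last first.
  exfalso; move/eqP: HK; apply.
  apply/matrixP => r c; have := H0 (r, c); rewrite /= => /negbFE/eqP ->.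
  by rewrite mxE.
exists (fun j => kermx A r j); split; first by exists c.
have HA : forall j k, A j k = q j (enum_val k) by move=> j k; rewrite mxE.
move=> i.
have := congr1 (fun M : 'M[R]_(m, #|J|) => M r (enum_rank i)) (mulmx_ker A).
rewrite /= !mxE => H; apply: etrans H; apply: eq_bigr => j _; by rewrite HA enum_rankK.
Qed.

Section S.
Variables (R : realFieldType) (V : finType) (e : rel V).

Lemma nonedge_ex (x : {ffun Ec e -> bool}) u v : u != v -> augment x u v = false ->
  exists f0 : Ec e, val f0 = [set u; v] /\ ~~ x f0.
Proof.
move=> uv /norP [ne /existsPn H].
have Hn : is_nonedge e [set u; v].
  by apply/existsP; exists u; apply/existsP; exists v; rewrite uv eqxx ne.
exists (exist (fun s : {set V} => is_nonedge e s) _ Hn); split => //.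
by have := H (exist (fun s : {set V} => is_nonedge e s) _ Hn); rewrite /= eqxx.
Qed.

Lemma XG_one (x : {ffun Ec e -> bool}) :
  (forall g h : Ec e, ~~ x g -> ~~ x h -> g = h) -> XG x.
Proof.
move=> Hx; rewrite /XG /chordal => x0 [|a0 [|a1 [|a2 [|a3 rest]]]] //= _ Hu _.
case A: (augment x a0 a2).
  by exists 0%N, 2%N; rewrite !modn_small.
case B: (augment x a1 a3).
  exists 1%N, 3%N; split => //.
  by case: rest {Hu} => [|? ?] //=; rewrite modn_small.
move: Hu; rewrite !inE => /andP [/norP [n01 /norP [n02 /norP [n03 _]]]
  /andP [/norP [_ /norP [n13 _]] _]].
have [f0 [F0 X0]] := @nonedge_ex x _ _ n02 A.
have [f1 [F1 X1]] := @nonedge_ex x _ _ n13 B.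
have E01 := Hx _ _ X0 X1.
have : a0 \in [set a1; a3] by rewrite -F1 -E01 F0 !inE eqxx.
by rewrite !inE (negbTE n01) (negbTE n03).
Qed.

Lemma in_conv (x : {ffun Ec e -> bool}) : XG x ->
  conv01 (R := R) (@XG V e) (fun i => (x i)%:R).
Proof.
move=> Hx; exists (fun z => (z == x)%:R); split.
- by move=> z; rewrite ler0n.
- by move=> z; case: (eqVneq z x) => [-> //|_]; rewrite /= mulr0n eqxx.
- by rewrite (bigD1 x) //= eqxx big1 ?addr0 // => z /negbTE ->.
- move=> i; rewrite (bigD1 x) //= eqxx mul1r big1 ?addr0 // => z /negbTE ->.
  by rewrite mul0r.
Qed.

Lemma sum_neq k (mu : 'I_k -> R) (t : 'I_k) :
  \sum_(j < k) mu j * (j != t)%:R = \sum_(j < k) mu j - mu t.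
Proof.
rewrite (bigD1 t) //= eqxx mulr0 add0r [in RHS](bigD1 t) //= addrC addrK.
by apply: eq_bigr => j ->; rewrite mulr1.
Qed.

Lemma sum_a (f : Ec e) (y : Ec e -> R) :
  \sum_i (if i == f then 1 else 0) * y i = y f.
Proof.
rewrite (bigD1 f) //= eqxx mul1r big1 ?addr0 // => i /negbTE ->.
by rewrite mul0r.
Qed.

Lemma full_dim : aff_rank (conv01 (R := R) (@XG V e)) #|{: Ec e}|.+1.
Proof.
split.
  pose xj (j : 'I_#|{: Ec e}|.+1) := [ffun i => j != lift ord0 (enum_rank i)].
  exists (fun j i => (xj j i)%:R); split.
    move=> j; apply: in_conv; apply: XG_one => g h.
    rewrite !ffunE !negbK => /eqP -> /eqP /lift_inj /enum_rank_inj //.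
  move=> mu Hs Hc.
  have H0 : forall t, mu (lift ord0 t) = 0.
    move=> t; have := Hc (enum_val t).
    under eq_bigr => j _ do rewrite ffunE enum_valK.
    by rewrite sum_neq Hs sub0r => /eqP; rewrite oppr_eq0 => /eqP.
  move=> j; case: (unliftP ord0 j) => [t -> //|->].
  move: Hs; rewrite big_ord_recl big1 ?addr0 // => t _.
move=> m p Hp Hind; rewrite leqNgt; apply/negP => Hlt.
have Hc : (#|{: option (Ec e)}| < m)%N by rewrite card_option.
have [mu [[j Hj] Hmu]] := @kernel_nontriv R (option (Ec e)) m
  (fun j o => if o is Some i then p j i else 1) Hc.
move/eqP: Hj; apply; apply: Hind.
  by have := Hmu None; under eq_bigr => k _ do rewrite mulr1.
by move=> i; apply: (Hmu (Some i)).
Qed.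

Lemma facet (f : Ec e) : facet_defining (conv01 (R := R) (@XG V e))
       (fun g => if g == f then 1 else 0) 1.
Proof.
split.
  move=> y [lam [H0 _ H1 Hy]]; rewrite sum_a Hy -[X in _ <= X]H1.
  apply: ler_sum => x _; case: (x f); rewrite ?mulr1 ?mulr0 //.
exists #|{: Ec e}|; split; first exact: full_dim.
split.
  pose xj (j : 'I_#|{: Ec e}|) := [ffun i => ~~ ((j == enum_rank i) && (i != f))].
  exists (fun j i => (xj j i)%:R); split.
    move=> j; split.
      apply: in_conv; apply: XG_one => g h.
      rewrite !ffunE !negbK => /andP [/eqP -> _] /andP [/eqP /enum_rank_inj //].
    by rewrite sum_a ffunE eqxx andbF.
  move=> mu Hs Hc.
  have H0 : forall i, i != f -> mu (enum_rank i) = 0.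
    move=> i nif; have := Hc i.
    under eq_bigr => j _ do rewrite ffunE nif andbT.
    by rewrite sum_neq Hs sub0r => /eqP; rewrite oppr_eq0 => /eqP.
  move=> j; case: (eqVneq (enum_val j) f) => Hj; last first.
    by rewrite -(enum_valK j) H0.
  move: Hs; rewrite (bigD1 j) //= big1 ?addr0 // => k kj.
  rewrite -(enum_valK k) H0 //; apply: contra kj => /eqP E.
  by apply/eqP; apply: enum_val_inj; rewrite E Hj.
move=> m p Hp Hind; rewrite leqNgt; apply/negP => Hlt.
have Hpf : forall j, p j f = 1 by move=> j; have [_] := Hp j; rewrite sum_a.
have [mu [[j Hj] Hmu]] := @kernel_nontriv R (Ec e) m
  (fun j i => if i == f then 1 else p j i) Hlt.
have Hs : \sum_(k < m) mu k = 0.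
  by have := Hmu f; rewrite eqxx; under eq_bigr => k _ do rewrite mulr1.
move/eqP: Hj; apply; apply: Hind => // i.
case: (eqVneq i f) => [->|nif].
  by under eq_bigr => k _ do rewrite Hpf mulr1.
by have := Hmu i; rewrite (negbTE nif).
Qed.

End S.

Theorem theorem1 (R : realFieldType) (V : finType) (e : rel V)
    (e_sym : symmetric e) (e_irr : irreflexive e)
    (not_complete : exists u v : V, u != v /\ ~~ e u v) :
  full_dimensional (conv01 (R := R) (@XG V e)) /\
  (forall f : Ec e,
     facet_defining (conv01 (R := R) (@XG V e))
       (fun g => if g == f then 1 else 0) 1).
Proof.
split; [exact: full_dim | exact: facet].
Qed.
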